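(* For real $f\ge 0$ define $$I_2(f)=(1+f)\iint_{\pi/2>\alpha>\beta>0}\frac{\mathrm{d}\alpha\,\mathrm{d}\beta}{\sqrt{\bigl((1+f)^2-4f\cos^2\alpha\bigr)\bigl((1+f)^2-4f\sin^2\beta\bigr)}}.$$ Let $\theta=f\,\frac{\mathrm{d}}{\mathrm{d}f}$ and put $g(f)=I_2(f)/(1+f)$. Define $$R(f)=\frac1f\Bigl(\theta^3 g-2f\,(\theta^3+\theta)\bigl(f\,g\bigr)+f^2\,\theta^3\bigl(f^2 g\bigr)\Bigr),$$ that is, $R=L(f,\theta)I_2$ for the operator $L(f,\theta)=\frac1f\bigl(\theta^3-2f(\theta^3+\theta)f+f^2\theta^3f^2\bigr)\frac1{1+f}$, where powers of $f$ act as multiplication operators and the operators are composed from right to left. Then for $0<f<1$, $$R(f)=2\left(\frac{2f}{1+f^2}\right)^2-1.$$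
   Context: The paper does not specify an explicit domain for this identity; it is stated here on $0<f<1$, where $I_2$ is real-analytic. *)

(* Defs.v *)
From Stdlib Require Import Reals.
From Coquelicot Require Import Coquelicot.
Open Scope R_scope.

Definition I2_integrand (f a b : R) : R :=
  1 / sqrt (((1 + f) ^ 2 - 4 * f * (cos a) ^ 2) *
            ((1 + f) ^ 2 - 4 * f * (sin b) ^ 2)).

(* I_2(f) = (1+f) * double integral over the triangle pi/2 > alpha > beta > 0,
   written as the iterated integral  int_0^{pi/2} d alpha int_0^alpha d beta. *)
Definition I2 (f : R) : R :=
  (1 + f) * RInt (fun a => RInt (fun b => I2_integrand f a b) 0 a) 0 (PI / 2).

Definition theta (h : R -> R) : R -> R := fun x => x * Derive h x.

Definition theta3 (h : R -> R) : R -> R := theta (theta (theta h)).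

Definition g (f : R) : R := I2 f / (1 + f).

Definition Rop (f : R) : R :=
  / f * ( theta3 g f
          - 2 * f * (theta3 (fun x => x * g x) f + theta (fun x => x * g x) f)
          + f ^ 2 * theta3 (fun x => x ^ 2 * g x) f ).

(* Main.v *)
Require Import Defs.
From Stdlib Require Import Reals.
From Coquelicot Require Import Coquelicot.
Open Scope R_scope.
From Stdlib Require Import Lra Lia.

Definition Qf (x k : R) := (1+x)^2 - 4*x*k.
Definition Q1 (x k : R) := 2*(1+x) - 4*k.
Definition hp (n:nat) (y:R) := / (y ^ n * sqrt y).
Definition pw (n:nat) (x k : R) := hp n (Qf x k).
Definition w (m:nat) (x k:R) : R := match m with
 | O => pw 0 x k
 | 1%nat => -1/2 * Q1 x k * pw 1 x k
 | 2%nat => 3/4 * Q1 x k ^2 * pw 2 x k - pw 1 x k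
 | _ => 9/2 * Q1 x k * pw 2 x k - 15/8 * Q1 x k ^ 3 * pw 3 x k end.

Lemma Qf_pos x k : 0 < x < 1 -> 0 <= k <= 1 -> 0 < Qf x k.
Proof. intros; unfold Qf; nra. Qed.

Lemma Qf_sin_pos x b : 0 < x < 1 -> 0 < Qf x (sin b ^ 2).
Proof. intros; apply Qf_pos; auto. pose proof (sin2_cos2 b). pose proof (pow2_ge_0 (sin b)). pose proof (pow2_ge_0 (cos b)). unfold Rsqr in *. simpl in *. nra. Qed.
Lemma Qf_cos_pos x b : 0 < x < 1 -> 0 < Qf x (cos b ^ 2).
Proof. intros; apply Qf_pos; auto. pose proof (sin2_cos2 b). pose proof (pow2_ge_0 (sin b)). pose proof (pow2_ge_0 (cos b)). unfold Rsqr in *. simpl in *. nra. Qed.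

Lemma hp_d n y : 0 < y ->
  is_derive (hp n) y (- (2 * INR n + 1) / 2 * hp (S n) y).
Proof.
  intros H. unfold hp.
  assert (Hs: 0 < sqrt y) by (apply sqrt_lt_R0; auto).
  assert (Hss: sqrt y * sqrt y = y) by (apply sqrt_sqrt; lra).
  assert (Hn: 0 < y ^ n) by (apply pow_lt; auto).
  auto_derive.
  - repeat split; auto. nra.
  - set (r := sqrt y) in *. clearbody r. subst y.
    destruct n as [|n].
    + simpl. field. lra.
    + rewrite S_INR. simpl pred. simpl pow. field. split; [lra|]. apply pow_nonzero. intro Hc; nra.
Qed.

Lemma scalR (a b : R) : scal a b = a * b.
Proof. reflexivity. Qed.

Lemma pw_comp n x (K : R -> R) t dK : is_derive K t dK -> 0 < Qf x (K t) ->
  is_derive (fun t => pw n x (K t)) t (- (2 * INR n + 1) / 2 * (-4 * x * dK) * pw (S n) x (K t)).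
Proof.
  intros HK Hp. unfold pw.
  assert (H2 : is_derive (fun t => Qf x (K t)) t (-4*x*dK)).
  { unfold Qf. auto_derive. exists dK; auto.
    replace (Derive (fun x => K x) t) with dK by (symmetry; apply is_derive_unique; auto). ring. }
  replace (- (2 * INR n + 1) / 2 * (-4 * x * dK) * hp (S n) (Qf x (K t)))
    with (scal (-4*x*dK) (- (2 * INR n + 1) / 2 * hp (S n) (Qf x (K t)))) by (unfold scal; simpl; unfold mult; simpl; ring).
  apply (is_derive_comp (hp n) (fun t => Qf x (K t))); auto.
  apply hp_d; auto.
Qed.

Lemma pw_dx n x k : 0 < Qf x k ->
  is_derive (fun x => pw n x k) x (- (2 * INR n + 1) / 2 * Q1 x k * pw (S n) x k).
Proof.
  intros Hp. unfold pw.
  assert (H2 : is_derive (fun x => Qf x k) x (Q1 x k)).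
  { unfold Qf, Q1. auto_derive. auto. ring. }
  replace (- (2 * INR n + 1) / 2 * Q1 x k * hp (S n) (Qf x k))
    with (scal (Q1 x k) (- (2 * INR n + 1) / 2 * hp (S n) (Qf x k))) by (unfold scal; simpl; unfold mult; simpl; ring).
  apply (is_derive_comp (hp n) (fun x => Qf x k)); auto.
  apply hp_d; auto.
Qed.

Lemma pw_Dx n x k : 0 < Qf x k -> Derive (fun x => pw n x k) x = - (2 * INR n + 1) / 2 * Q1 x k * pw (S n) x k.
Proof. intros; apply is_derive_unique, pw_dx; auto. Qed.

Lemma isd_eq (f : R -> R) (x l l' : R) : is_derive f x l -> l = l' -> is_derive f x l'.
Proof. intros H ->; auto. Qed.

Lemma w_dx m x k : (m <= 2)%nat -> 0 < Qf x k -> is_derive (fun x => w m x k) x (w (S m) x k).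
Proof.
  intros Hm Hp.
  assert (E: forall n, ex_derive (fun x => pw n x k) x) by (intro n; eexists; apply pw_dx; auto).
  destruct m as [|[|[|]]]; [ | | | lia]; unfold w.
  - eapply isd_eq. apply pw_dx; auto. simpl. field.
  - unfold Q1. auto_derive. repeat split; auto. rewrite !pw_Dx; auto. unfold Q1; simpl; field.
  - unfold Q1. auto_derive. repeat split; auto. rewrite !pw_Dx; auto. unfold Q1; simpl; field.
Qed.

Lemma cpt_of_der (f : R -> R) x : ex_derive f x -> continuity_pt f x.
Proof. intros H. apply continuity_pt_filterlim. apply (ex_derive_continuous f x H). Qed.

Lemma c2_comp1 (h : R -> R) (f : R -> R -> R) x y :
  continuity_pt h (f x y) -> continuity_2d_pt f x y -> continuity_2d_pt (fun u v => h (f u v)) x y.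
Proof. apply continuity_1d_2d_pt_comp. Qed.

Ltac c2 :=
  lazymatch goal with
  | |- continuity_2d_pt (fun u v => @?f u v + @?g u v) _ _ => refine (continuity_2d_pt_plus f g _ _ _ _); c2
  | |- continuity_2d_pt (fun u v => @?f u v - @?g u v) _ _ => refine (continuity_2d_pt_minus f g _ _ _ _); c2
  | |- continuity_2d_pt (fun u v => @?f u v * @?g u v) _ _ => refine (continuity_2d_pt_mult f g _ _ _ _); c2
  | |- continuity_2d_pt (fun u v => @?f u v ^ ?n) _ _ =>
      refine (c2_comp1 (fun y => y ^ n) f _ _ _ _); [apply cpt_of_der; auto_derive; auto | c2]
  | |- continuity_2d_pt (fun u v => u) _ _ => apply continuity_2d_pt_id1
  | |- continuity_2d_pt (fun u v => v) _ _ => apply continuity_2d_pt_id2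
  | |- continuity_2d_pt (fun u v => ?c) _ _ => first [apply continuity_2d_pt_const | idtac]
  | _ => idtac
  end.

Lemma c2_kappa (K : R -> R) x y : (forall t, continuity_pt K t) -> continuity_2d_pt (fun u v => K v) x y.
Proof. intros HK. exact (c2_comp1 K (fun u v => v) x y (HK _) (continuity_2d_pt_id2 x y)). Qed.

Lemma c2_Qf (K : R -> R) x y : (forall t, continuity_pt K t) -> continuity_2d_pt (fun u v => Qf u (K v)) x y.
Proof. intros HK. unfold Qf. c2. apply c2_kappa; auto. Qed.

Lemma c2_Q1 (K : R -> R) x y : (forall t, continuity_pt K t) -> continuity_2d_pt (fun u v => Q1 u (K v)) x y.
Proof. intros HK. unfold Q1. c2. apply c2_kappa; auto. Qed.

Lemma c2_pw n (K : R -> R) x y : (forall t, continuity_pt K t) -> 0 < Qf x (K y) ->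
  continuity_2d_pt (fun u v => pw n u (K v)) x y.
Proof. intros HK Hp. unfold pw. refine (c2_comp1 (hp n) (fun u v => Qf u (K v)) _ _ _ _).
  apply cpt_of_der. eexists; apply hp_d; auto. apply c2_Qf; auto. Qed.

Lemma c2_w m (K : R -> R) x y : (forall t, continuity_pt K t) -> 0 < Qf x (K y) ->
  continuity_2d_pt (fun u v => w m u (K v)) x y.
Proof. intros HK Hp.
  destruct m as [|[|[|]]]; unfold w; c2; try apply c2_pw; try apply c2_Q1; auto.
Qed.

Lemma cont_sin2 t : continuity_pt (fun b => sin b ^ 2) t.
Proof. apply cpt_of_der. auto_derive. auto. Qed.
Lemma cont_cos2 t : continuity_pt (fun b => cos b ^ 2) t.
Proof. apply cpt_of_der. auto_derive. auto. Qed.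

Lemma c2_ws m x y : 0 < x < 1 -> continuity_2d_pt (fun u v => w m u (sin v ^ 2)) x y.
Proof. intros. apply (c2_w m (fun b => sin b ^ 2)). apply cont_sin2. apply Qf_sin_pos; auto. Qed.
Lemma c2_wc m x y : 0 < x < 1 -> continuity_2d_pt (fun u v => w m u (cos v ^ 2)) x y.
Proof. intros. apply (c2_w m (fun b => cos b ^ 2)). apply cont_cos2. apply Qf_cos_pos; auto. Qed.

Lemma c2_cpt (f : R -> R -> R) x y : continuity_2d_pt f x y -> continuity_pt (f x) y.
Proof.
  intros H. unfold continuity_pt, continue_in, limit1_in, limit_in. intros eps Heps.
  destruct (H (mkposreal eps Heps)) as [d Hd]. exists d. split; [apply cond_pos|].
  intros z [[_ Hz] Hdist]. simpl in *. unfold R_dist in *. apply Hd; auto.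
  rewrite Rminus_eq_0, Rabs_R0; apply cond_pos.
Qed.

Lemma c2_cont (f : R -> R -> R) x y : continuity_2d_pt f x y -> continuous (f x) y.
Proof. intros H. apply continuity_pt_filterlim. apply c2_cpt; auto. Qed.

Lemma loc_int l r x : l < x < r -> locally x (fun y => l < y < r).
Proof.
  intros Hx. assert (Hd : 0 < Rmin (x - l) (r - x)) by (apply Rmin_glb_lt; lra).
  exists (mkposreal _ Hd). intros y Hy. unfold ball in Hy; simpl in Hy. unfold AbsRing_ball, abs, minus, plus, opp in Hy; simpl in Hy.
  pose proof (Rmin_l (x - l) (r - x)). pose proof (Rmin_r (x - l) (r - x)).
  apply Rabs_lt_between in Hy. lra.
Qed.

Lemma loc2_int l r x y : l < x < r -> locally_2d (fun u v => l < u < r) x y.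
Proof.
  intros Hx. assert (Hd : 0 < Rmin (x - l) (r - x)) by (apply Rmin_glb_lt; lra).
  exists (mkposreal _ Hd). intros u v Hu _. simpl in Hu.
  pose proof (Rmin_l (x - l) (r - x)). pose proof (Rmin_r (x - l) (r - x)).
  apply Rabs_lt_between in Hu. lra.
Qed.

Lemma abs_RInt_le_const' (f : R -> R) a b M :
  ex_RInt f a b -> (forall t, Rmin a b <= t <= Rmax a b -> Rabs (f t) <= M) ->
  Rabs (RInt f a b) <= Rabs (b - a) * M.
Proof.
  intros He Hb. destruct (Rle_dec a b) as [Hab|Hab].
  - rewrite (Rabs_right (b - a)) by lra. apply abs_RInt_le_const; auto.
    intros t Ht; apply Hb. rewrite Rmin_left, Rmax_right; lra.
  - apply Rnot_le_lt in Hab. rewrite <- (opp_RInt_swap f b a (ex_RInt_swap _ _ _ He)). unfold opp; simpl. rewrite Rabs_Ropp.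
    rewrite (Rabs_left (b - a)) by lra. replace (- (b - a)) with (a - b) by ring.
    apply abs_RInt_le_const; [lra| apply ex_RInt_swap; auto|].
    intros t Ht; apply Hb. rewrite Rmin_right, Rmax_left; lra.
Qed.

Lemma c2_RInt (phi : R -> R -> R) l r x0 a0 : l < x0 < r ->
  (forall x b, l < x < r -> continuity_2d_pt phi x b) ->
  continuity_2d_pt (fun x a => RInt (phi x) 0 a) x0 a0.
Proof.
  intros Hx Hc eps.
  set (T := Rabs a0 + 1).
  assert (HT : 0 < T) by (unfold T; pose proof (Rabs_pos a0); lra).
  assert (He1 : 0 < eps / (2 * (T + 1))) by (apply Rdiv_lt_0_compat; [apply cond_pos|lra]).
  destruct (uniform_continuity_2d_1d' phi (-T) T x0 (fun b _ => Hc x0 b Hx) (mkposreal _ He1)) as [d1 Hd1].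
  simpl in Hd1.
  destruct (continuity_ab_maj (fun b => Rabs (phi x0 b)) (-T) T) as [Mx [HM _]]; [lra| |].
  { intros c _. apply (continuity_pt_comp (phi x0) Rabs). apply c2_cpt; auto. apply Rcontinuity_abs. }
  set (M := Rabs (phi x0 Mx)) in *.
  set (e1 := eps / (2 * (T + 1))) in *.
  assert (HM0 : 0 <= M) by apply Rabs_pos.
  assert (Hd2 : 0 < eps / (2 * (M + e1 + 1))) by (apply Rdiv_lt_0_compat; [apply cond_pos|lra]).
  assert (Hd : 0 < Rmin (Rmin d1 (Rmin 1 (eps / (2 * (M + e1 + 1))))) (Rmin (x0 - l) (r - x0))).
  { repeat apply Rmin_glb_lt; try lra; apply cond_pos. }
  exists (mkposreal _ Hd). intros u v Hu Hv. simpl in Hu, Hv.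
  pose proof (Rmin_l (Rmin d1 (Rmin 1 (eps / (2 * (M + e1 + 1))))) (Rmin (x0 - l) (r - x0))) as m1.
  pose proof (Rmin_r (Rmin d1 (Rmin 1 (eps / (2 * (M + e1 + 1))))) (Rmin (x0 - l) (r - x0))) as m2.
  pose proof (Rmin_l d1 (Rmin 1 (eps / (2 * (M + e1 + 1))))) as m3.
  pose proof (Rmin_r d1 (Rmin 1 (eps / (2 * (M + e1 + 1))))) as m4.
  pose proof (Rmin_l 1 (eps / (2 * (M + e1 + 1)))) as m5.
  pose proof (Rmin_r 1 (eps / (2 * (M + e1 + 1)))) as m6.
  pose proof (Rmin_l (x0 - l) (r - x0)) as m7. pose proof (Rmin_r (x0 - l) (r - x0)) as m8.
  assert (Hul : l < u < r) by (apply Rabs_lt_between in Hu; lra).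
  assert (Hud : x0 - d1 <= u <= x0 + d1) by (apply Rabs_lt_between in Hu; lra).
  assert (Hex : forall x a b, l < x < r -> ex_RInt (phi x) a b).
  { intros x a b Hx'. apply (ex_RInt_continuous (V := R_CompleteNormedModule)). intros z _. apply c2_cont; auto. }
  assert (Hdiff : forall b, -T <= b <= T -> Rabs (phi u b - phi x0 b) < e1).
  { intros b Hb. apply (Hd1 b x0 b u); auto; try lra. rewrite Rminus_eq_0, Rabs_R0; apply cond_pos. }
  assert (Hbd : forall b, -T <= b <= T -> Rabs (phi u b) <= M + e1).
  { intros b Hb. pose proof (Hdiff b Hb). pose proof (HM b Hb). simpl in *.
    pose proof (Rabs_triang (phi u b - phi x0 b) (phi x0 b)).
    replace (phi u b - phi x0 b + phi x0 b) with (phi u b) in * by ring. lra. }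
  assert (Ha0 : Rabs a0 < T) by (unfold T; lra).
  assert (HTd : T = Rabs a0 + 1) by reflexivity. pose proof (Rle_abs a0). pose proof (Rabs_maj2 a0).
  assert (Hvb : Rabs (v - a0) < 1) by lra.
  replace (RInt (phi u) 0 v - RInt (phi x0) 0 a0) with
    (RInt (phi u) a0 v + RInt (fun b => phi u b - phi x0 b) 0 a0).
  2:{ rewrite <- (RInt_Chasles (phi u) 0 a0 v) by (apply Hex; auto). unfold plus; simpl.
      rewrite (RInt_minus (phi u) (phi x0)) by (apply Hex; auto). unfold minus, plus, opp; simpl. ring. }
  assert (H1 : Rabs (RInt (phi u) a0 v) <= Rabs (v - a0) * (M + e1)).
  { apply abs_RInt_le_const'. apply Hex; auto. intros t Ht. apply Hbd.
    apply Rabs_lt_between in Hvb. apply Rabs_lt_between in Ha0.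
    pose proof (Rmin_l a0 v). pose proof (Rmin_r a0 v). pose proof (Rmax_l a0 v). pose proof (Rmax_r a0 v).
    destruct (Rle_lt_dec a0 v); [rewrite Rmin_left, Rmax_right in Ht by lra| rewrite Rmin_right, Rmax_left in Ht by lra]; lra. }
  assert (H2 : Rabs (RInt (fun b => phi u b - phi x0 b) 0 a0) <= Rabs (a0 - 0) * e1).
  { apply abs_RInt_le_const'.
    - apply (ex_RInt_minus (V := R_NormedModule)); apply Hex; auto.
    - intros t Ht. apply Rlt_le, Hdiff. apply Rabs_lt_between in Ha0.
      destruct (Rle_lt_dec 0 a0); [rewrite Rmin_left, Rmax_right in Ht by lra| rewrite Rmin_right, Rmax_left in Ht by lra]; lra. }
  eapply Rle_lt_trans. apply Rabs_triang.
  rewrite Rminus_0_r in H2.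
  assert (Rabs (v - a0) * (M + e1) < eps / 2).
  { assert (Rabs (v - a0) < eps / (2 * (M + e1 + 1))) by lra.
    assert (0 < M + e1 + 1) by lra.
    apply Rle_lt_trans with (eps / (2 * (M + e1 + 1)) * (M + e1)).
    apply Rmult_le_compat_r; [lra| lra].
    unfold Rdiv. rewrite Rinv_mult. 
    assert (/ (M + e1 + 1) * (M + e1) < 1).
    { apply Rmult_lt_reg_l with (M + e1 + 1); [lra|]. field_simplify; lra. }
    pose proof (cond_pos eps). nra. }
  assert (Rabs a0 * e1 < eps / 2).
  { unfold e1. assert (Rabs a0 / (T + 1) < 1).
    { apply Rmult_lt_reg_l with (T + 1); [lra|]. field_simplify; lra. }
    pose proof (cond_pos eps). pose proof (Rabs_pos a0).
    replace (Rabs a0 * (eps / (2 * (T + 1)))) with ((Rabs a0 / (T + 1)) * (eps / 2)) by (field; lra). nra. }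
  lra.
Qed.

Definition V (m : nat) (x a : R) := RInt (fun b => w m x (sin b ^ 2)) 0 a.

Lemma ex_RInt_ws m x a b : 0 < x < 1 -> ex_RInt (fun t => w m x (sin t ^ 2)) a b.
Proof.
  intros Hx. apply (ex_RInt_continuous (V := R_CompleteNormedModule)). intros z _.
  exact (c2_cont (fun u v => w m u (sin v ^ 2)) x z (c2_ws m x z Hx)).
Qed.

Lemma loc2_ext (P : R -> R -> Prop) x y : 0 < x < 1 -> (forall u v, 0 < u < 1 -> P u v) -> locally_2d P x y.
Proof. intros Hx H. destruct (loc2_int 0 1 x y Hx) as [d Hd]. exists d. intros u v Hu Hv. apply H, (Hd u v Hu Hv). Qed.

Lemma V_dx m x a : (m <= 2)%nat -> 0 < x < 1 -> is_derive (fun x => V m x a) x (V (S m) x a).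
Proof.
  intros Hm Hx. unfold V.
  eapply isd_eq.
  - apply (is_derive_RInt_param (fun x b => w m x (sin b ^ 2)) 0 a x).
    + apply (filter_imp (fun y => 0 < y < 1)); [|apply loc_int; auto].
      intros y Hy t _. eexists. apply w_dx; auto. apply Qf_sin_pos; auto.
    + intros t _. apply continuity_2d_pt_ext_loc with (f := fun u v => w (S m) u (sin v ^ 2)).
      * apply loc2_ext; auto. intros u v Hu. symmetry. apply is_derive_unique.
        apply w_dx; auto. apply Qf_sin_pos; auto.
      * apply c2_ws; auto.
    + apply (filter_imp (fun y => 0 < y < 1)); [|apply loc_int; auto].
      intros y Hy. apply ex_RInt_ws; auto.
  - apply RInt_ext. intros t _. apply is_derive_unique. apply w_dx; auto. apply Qf_sin_pos; auto.
Qed.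

Lemma c2_V m x a : 0 < x < 1 -> continuity_2d_pt (fun x a => V m x a) x a.
Proof.
  intros Hx. unfold V. apply (c2_RInt (fun x b => w m x (sin b ^ 2)) 0 1); auto.
  intros; apply c2_ws; auto.
Qed.

Lemma V_da m x a : 0 < x < 1 -> is_derive (fun a => V m x a) a (w m x (sin a ^ 2)).
Proof.
  intros Hx. unfold V. apply (is_derive_RInt (fun b => w m x (sin b ^ 2)) (fun a => RInt (fun b => w m x (sin b ^ 2)) 0 a) 0 a).
  - apply filter_forall. intros b. apply (RInt_correct (V := R_CompleteNormedModule)). apply ex_RInt_ws; auto.
  - exact (c2_cont (fun u v => w m u (sin v ^ 2)) x a (c2_ws m x a Hx)).
Qed.

Definition wc (m : nat) (x a : R) := w m x (cos a ^ 2).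
Definition Fo (j : nat) (x a : R) := match j with
 | O => wc 0 x a * V 0 x a
 | 1%nat => wc 1 x a * V 0 x a + wc 0 x a * V 1 x a
 | 2%nat => wc 2 x a * V 0 x a + 2 * (wc 1 x a * V 1 x a) + wc 0 x a * V 2 x a
 | _ => wc 3 x a * V 0 x a + 3 * (wc 2 x a * V 1 x a) + 3 * (wc 1 x a * V 2 x a) + wc 0 x a * V 3 x a end.

Lemma wc_dx m x a : (m <= 2)%nat -> 0 < x < 1 -> is_derive (fun x => wc m x a) x (wc (S m) x a).
Proof. intros; unfold wc; apply w_dx; auto; apply Qf_cos_pos; auto. Qed.

Lemma isd_mult (f g : R -> R) (x df dg : R) : is_derive f x df -> is_derive g x dg ->
  is_derive (fun x => f x * g x) x (df * g x + f x * dg).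
Proof. intros H1 H2. apply (is_derive_mult f g x df dg H1 H2). intros; apply Rmult_comm. Qed.
Lemma isd_plus (f g : R -> R) (x df dg : R) : is_derive f x df -> is_derive g x dg ->
  is_derive (fun x => f x + g x) x (df + dg).
Proof. intros H1 H2. apply (is_derive_plus f g x df dg H1 H2). Qed.
Lemma isd_scal (f : R -> R) (c x df : R) : is_derive f x df -> is_derive (fun x => c * f x) x (c * df).
Proof. intros H1. apply (is_derive_scal f x c df H1). Qed.

Lemma Fo_dx j x a : (j <= 2)%nat -> 0 < x < 1 -> is_derive (fun x => Fo j x a) x (Fo (S j) x a).
Proof.
  intros Hj Hx.
  assert (W : forall m, (m <= 2)%nat -> is_derive (fun x => wc m x a) x (wc (S m) x a)) by (intros; apply wc_dx; auto).
  assert (VV : forall m, (m <= 2)%nat -> is_derive (fun x => V m x a) x (V (S m) x a)) by (intros; apply V_dx; auto).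
  destruct j as [|[|[|]]]; [ | | | lia]; unfold Fo; eapply isd_eq.
  - apply isd_mult; [apply (W 0%nat)|apply (VV 0%nat)]; lia.
  - cbv beta; ring.
  - apply isd_plus; apply isd_mult; [apply (W 1%nat)|apply (VV 0%nat)|apply (W 0%nat)|apply (VV 1%nat)]; lia.
  - cbv beta; ring.
  - apply isd_plus; [apply isd_plus|]; [apply isd_mult| apply isd_scal; apply isd_mult | apply isd_mult];
    [apply (W 2%nat)|apply (VV 0%nat)|apply (W 1%nat)|apply (VV 1%nat)|apply (W 0%nat)|apply (VV 2%nat)]; lia.
  - cbv beta; ring.
Qed.
Lemma c2_wc' m x a : 0 < x < 1 -> continuity_2d_pt (fun u v => wc m u v) x a.
Proof. intros. unfold wc. apply c2_wc; auto. Qed.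
Lemma c2_V' m x a : 0 < x < 1 -> continuity_2d_pt (fun u v => V m u v) x a.
Proof. intros. apply c2_V; auto. Qed.

Lemma c2_Fo j x a : 0 < x < 1 -> continuity_2d_pt (fun x a => Fo j x a) x a.
Proof.
  intros Hx. destruct j as [|[|[|]]]; unfold Fo; c2; first [apply c2_wc' | apply c2_V']; auto.
Qed.

Definition G (j : nat) (x : R) := RInt (fun a => Fo j x a) 0 (PI / 2).

Lemma ex_RInt_Fo j x a b : 0 < x < 1 -> ex_RInt (fun t => Fo j x t) a b.
Proof.
  intros Hx. apply (ex_RInt_continuous (V := R_CompleteNormedModule)). intros z _.
  exact (c2_cont (fun u v => Fo j u v) x z (c2_Fo j x z Hx)).
Qed.

Lemma G_dx j x : (j <= 2)%nat -> 0 < x < 1 -> is_derive (G j) x (G (S j) x).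
Proof.
  intros Hj Hx. unfold G.
  eapply isd_eq.
  - apply (is_derive_RInt_param (fun x a => Fo j x a) 0 (PI/2) x).
    + apply (filter_imp (fun y => 0 < y < 1)); [|apply loc_int; auto].
      intros y Hy t _. eexists. apply (Fo_dx j y t Hj Hy).
    + intros t _. apply continuity_2d_pt_ext_loc with (f := fun u v => Fo (S j) u v).
      * apply loc2_ext; auto. intros u v Hu. symmetry. apply is_derive_unique.
        apply Fo_dx; auto.
      * apply c2_Fo; auto.
    + apply (filter_imp (fun y => 0 < y < 1)); [|apply loc_int; auto].
      intros y Hy. apply ex_RInt_Fo; auto.
  - apply RInt_ext. intros t _. apply is_derive_unique. apply Fo_dx; auto.
Qed.

Lemma I2w y a b : 0 < y < 1 -> I2_integrand y a b = w 0 y (cos a ^ 2) * w 0 y (sin b ^ 2).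
Proof.
  intros Hy. pose proof (Qf_cos_pos y a Hy). pose proof (Qf_sin_pos y b Hy).
  unfold I2_integrand, w, pw, hp. unfold Qf in *. rewrite !pow_O.
  rewrite sqrt_mult by lra.
  assert (0 < sqrt ((1 + y) ^ 2 - 4 * y * cos a ^ 2)) by (apply sqrt_lt_R0; lra).
  assert (0 < sqrt ((1 + y) ^ 2 - 4 * y * sin b ^ 2)) by (apply sqrt_lt_R0; lra).
  field. split; lra.
Qed.

Lemma RInt_scal_R (f : R -> R) (c a b : R) : ex_RInt f a b -> RInt (fun t => c * f t) a b = c * RInt f a b.
Proof. intros H. exact (RInt_scal f a b c H). Qed.

Lemma g_eq y : 0 < y < 1 -> g y = G 0 y.
Proof.
  intros Hy. unfold g, I2, G.
  assert (E: forall u : R, (1 + y) * u / (1 + y) = u) by (intro; field; lra). rewrite E.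
  apply RInt_ext. intros a _. unfold Fo, wc, V.
  rewrite <- RInt_scal_R by (apply ex_RInt_ws; auto).
  apply RInt_ext. intros b _. apply (I2w y a b Hy).
Qed.

Lemma pw_dk n x k : 0 < Qf x k -> is_derive (fun k => pw n x k) k (2 * x * (2 * INR n + 1) * pw (S n) x k).
Proof.
  intros Hp. assert (Hid : is_derive (fun t : R => t) k 1) by (auto_derive; auto).
  eapply isd_eq. apply (pw_comp n x (fun t => t) k 1 Hid Hp). field.
Qed.

Lemma sin2 t : sin t ^ 2 = 1 - cos t ^ 2.
Proof. pose proof (sin2_cos2 t). unfold Rsqr in H. lra. Qed.

Lemma sc_sin (h : R -> R) (dh b : R) : is_derive h (sin b ^ 2) dh ->
  is_derive (fun b => sin b * cos b * h (sin b ^ 2)) b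
    ((1 - 2 * sin b ^ 2) * h (sin b ^ 2) + 2 * sin b ^ 2 * (1 - sin b ^ 2) * dh).
Proof.
  intros Hh. auto_derive. exists dh; auto.
  replace (sin b * (sin b * 1)) with (sin b ^ 2) by ring.
  replace (Derive (fun x => h x) (sin b ^ 2)) with dh by (symmetry; apply is_derive_unique; auto).
  pose proof (sin2_cos2 b) as H. unfold Rsqr in H.
  apply Rminus_diag_uniq. 
  transitivity ((sin b * sin b + cos b * cos b - 1) * (h (sin b ^ 2) + 2 * sin b ^ 2 * dh)); [ring|].
  rewrite H; ring.
Qed.

Lemma sc_cos (h : R -> R) (dh a : R) : is_derive h (cos a ^ 2) dh ->
  is_derive (fun a => sin a * cos a * h (cos a ^ 2)) a
    ((2 * cos a ^ 2 - 1) * h (cos a ^ 2) - 2 * cos a ^ 2 * (1 - cos a ^ 2) * dh).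
Proof.
  intros Hh. auto_derive. exists dh; auto.
  replace (cos a * (cos a * 1)) with (cos a ^ 2) by ring.
  replace (Derive (fun x => h x) (cos a ^ 2)) with dh by (symmetry; apply is_derive_unique; auto).
  pose proof (sin2_cos2 a) as H. unfold Rsqr in H.
  apply Rminus_diag_uniq. 
  transitivity ((sin a * sin a + cos a * cos a - 1) * (- h (cos a ^ 2) - 2 * cos a ^ 2 * dh)); [ring|].
  rewrite H; ring.
Qed.

Lemma deriv0_const (D : R -> R) a : (forall t, is_derive D t 0) -> D a = D 0.
Proof.
  intros HD.
  pose proof (is_RInt_derive D (fun _ => 0) 0 a (fun t _ => HD t) (fun t _ => continuous_const (0:R) t)) as H.
  apply is_RInt_unique in H.
  assert (H0 : RInt (fun _ : R => 0) 0 a = 0) by (rewrite RInt_const; exact (Rmult_0_r _)).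
  rewrite H0 in H. unfold minus, plus, opp in H. cbn in H. lra.
Qed.

Definition a0 x := 1 / (x ^ 2 - 1).
Definition a1 x := (3 * x ^ 2 - 1) / (x * (x ^ 2 - 1)).
Definition a0d x := -2 * x / (x ^ 2 - 1) ^ 2.
Definition a1d x := - (3 * x ^ 4 + 1) / (x ^ 2 * (x ^ 2 - 1) ^ 2).
Definition h2 x k := -1 / x * pw 1 x k.
Definition h2d x k := -1 / x * (2 * x * 3 * pw 2 x k).
Definition h3 x k := 1 / x ^ 2 * pw 1 x k + 3 / (2 * x) * (Q1 x k * pw 2 x k).
Definition h3d x k := 1 / x ^ 2 * (2 * x * 3 * pw 2 x k) + 3 / (2 * x) * (-4 * pw 2 x k + Q1 x k * (2 * x * 5 * pw 3 x k)).

Lemma isd_minus (f g : R -> R) (x df dg : R) : is_derive f x df -> is_derive g x dg ->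
  is_derive (fun x => f x - g x) x (df - dg).
Proof. intros H1 H2. apply (is_derive_minus f g x df dg H1 H2). Qed.

Lemma pw_dk' n x k : 0 < Qf x k -> is_derive (fun k => pw n x k) k (2 * x * (2 * INR n + 1) * pw (S n) x k).
Proof. apply pw_dk. Qed.

Lemma h2_dk x k : 0 < Qf x k -> is_derive (h2 x) k (h2d x k).
Proof.
  intros Hp. unfold h2, h2d. eapply isd_eq. apply isd_scal. apply (pw_dk 1 x k Hp).
  change (INR 1) with 1. ring.
Qed.

Lemma Q1_dk x k : is_derive (fun k => Q1 x k) k (-4).
Proof. unfold Q1. auto_derive; auto. ring. Qed.

Lemma h3_dk x k : 0 < Qf x k -> is_derive (h3 x) k (h3d x k).
Proof.
  intros Hp. unfold h3, h3d. eapply isd_eq.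
  apply isd_plus; apply isd_scal; [|apply isd_mult; [apply Q1_dk|]]; apply pw_dk; auto.
  change (INR 1) with 1. change (INR 2) with (1 + 1). cbv beta. ring.
Qed.

Lemma x2m1 x : 0 < x < 1 -> x ^ 2 - 1 <> 0.
Proof. intros Hx H. nra. Qed.

Lemma V0x m x : V m x 0 = 0.
Proof. unfold V. rewrite RInt_point. reflexivity. Qed.

Lemma V2_rel x a : 0 < x < 1 ->
  V 2 x a = - a0 x * V 0 x a - a1 x * V 1 x a + sin a * cos a * h2 x (sin a ^ 2).
Proof.
  intros Hx.
  set (D := fun t => V 2 x t + a0 x * V 0 x t + a1 x * V 1 x t - sin t * cos t * h2 x (sin t ^ 2)).
  assert (HD : forall t, is_derive D t 0).
  { intros t. unfold D. eapply isd_eq.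
    - apply isd_minus.
      + apply isd_plus; [apply isd_plus|].
        * exact (V_da 2 x t Hx).
        * apply isd_scal. exact (V_da 0 x t Hx).
        * apply isd_scal. exact (V_da 1 x t Hx).
      + apply (sc_sin (h2 x)). apply h2_dk. apply Qf_sin_pos; auto.
    - pose proof (Qf_sin_pos x t Hx) as HQ.
      assert (HS : 0 < sqrt (Qf x (sin t ^ 2))) by (apply sqrt_lt_R0; auto).
      unfold h2, h2d, a0, a1, w. unfold pw, hp, Q1.
      set (sB := sqrt (Qf x (sin t ^ 2))) in *. unfold Qf in *. set (S := sin t ^ 2) in *.
      cbv beta. field. repeat split; try lra. 
      all: apply x2m1; auto. }
  pose proof (deriv0_const D a HD) as E. unfold D in E.
  rewrite !V0x, sin_0 in E. lra.
Qed.

Lemma V3_rel x a : 0 < x < 1 ->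
  V 3 x a = - a0d x * V 0 x a - (a0 x + a1d x) * V 1 x a - a1 x * V 2 x a + sin a * cos a * h3 x (sin a ^ 2).
Proof.
  intros Hx.
  set (D := fun t => V 3 x t + a0d x * V 0 x t + (a0 x + a1d x) * V 1 x t + a1 x * V 2 x t - sin t * cos t * h3 x (sin t ^ 2)).
  assert (HD : forall t, is_derive D t 0).
  { intros t. unfold D. eapply isd_eq.
    - apply isd_minus.
      + apply isd_plus; [apply isd_plus; [apply isd_plus|]|].
        * exact (V_da 3 x t Hx).
        * apply isd_scal. exact (V_da 0 x t Hx).
        * apply isd_scal. exact (V_da 1 x t Hx).
        * apply isd_scal. exact (V_da 2 x t Hx).
      + apply (sc_sin (h3 x)). apply h3_dk. apply Qf_sin_pos; auto.
    - pose proof (Qf_sin_pos x t Hx) as HQ.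
      assert (HS : 0 < sqrt (Qf x (sin t ^ 2))) by (apply sqrt_lt_R0; auto).
      unfold h3, h3d, a0, a1, a0d, a1d, w. unfold pw, hp, Q1.
      set (sB := sqrt (Qf x (sin t ^ 2))) in *. unfold Qf in *. set (S := sin t ^ 2) in *.
      cbv beta. field. repeat split; try lra. 
      all: apply x2m1; auto. }
  pose proof (deriv0_const D a HD) as E. unfold D in E.
  rewrite !V0x, sin_0 in E. lra.
Qed.

Definition K x := 2 * (1 + x ^ 2).
Definition pp x := x * (1 - x ^ 2) / (1 + x ^ 2) ^ 2.
Definition qq x := - (1 - x ^ 2) ^ 3 / (16 * x * (1 + x ^ 2)).
Definition FF x A := pp x * (/ (K x - A) - / A) + qq x * (/ (K x - A) ^ 2 - / A ^ 2).
Definition FFd x A := pp x * (/ (K x - A) ^ 2 + / A ^ 2) + qq x * (2 / (K x - A) ^ 3 + 2 / A ^ 3).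
Definition Rr x A := A * (K x - A) * FF x A.
Definition Rrd x A := (K x - 2 * A) * FF x A + A * (K x - A) * FFd x A.
Definition Yh x A := Rr x A * hp 0 A * hp 0 (K x - A).
Definition YD x A := Rrd x A * hp 0 A * hp 0 (K x - A) + Rr x A * (-1/2 * hp 1 A) * hp 0 (K x - A)
  + Rr x A * hp 0 A * (1/2 * hp 1 (K x - A)).

Ltac nz := repeat (apply Rmult_integral_contrapositive_currified || apply pow_nonzero); try (intro; lra).

Lemma isd_comp (f g : R -> R) (x df dg : R) : is_derive f (g x) df -> is_derive g x dg ->
  is_derive (fun x => f (g x)) x (dg * df).
Proof. intros H1 H2. exact (is_derive_comp f g x df dg H1 H2). Qed.

Lemma Rr_d x A : 0 < A -> 0 < K x - A -> is_derive (Rr x) A (Rrd x A).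
Proof.
  intros H1 H2. unfold Rr, Rrd, FF, FFd. auto_derive.
  - repeat split; nz.
  - field; repeat split; nz.
Qed.

Lemma hpK_d x A : 0 < K x - A -> is_derive (fun A => hp 0 (K x - A)) A (1/2 * hp 1 (K x - A)).
Proof.
  intros H. eapply isd_eq. apply (isd_comp (hp 0) (fun A => K x - A)).
  apply hp_d; auto. auto_derive; auto. cbv beta. change (INR 0) with 0. field.
Qed.

Lemma Yh_d x A : 0 < A -> 0 < K x - A -> is_derive (Yh x) A (YD x A).
Proof.
  intros H1 H2. unfold Yh, YD. eapply isd_eq.
  apply isd_mult; [apply isd_mult|]. apply Rr_d; auto. apply hp_d; auto. apply hpK_d; auto.
  cbv beta. change (INR 0) with 0. field.
Qed.

Lemma KQ x C : K x - Qf x C = Qf x (1 - C).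
Proof. unfold K, Qf. ring. Qed.

Lemma Qfcos_da x a : is_derive (fun a => Qf x (cos a ^ 2)) a (8 * x * (sin a * cos a)).
Proof. unfold Qf. auto_derive; auto. ring. Qed.

Lemma Ya_d x a : 0 < x < 1 -> is_derive (fun a => Yh x (Qf x (cos a ^ 2))) a (8 * x * (sin a * cos a) * YD x (Qf x (cos a ^ 2))).
Proof.
  intros Hx. apply (isd_comp (Yh x) (fun a => Qf x (cos a ^ 2))).
  apply Yh_d. apply Qf_cos_pos; auto. rewrite KQ, <- sin2. apply Qf_sin_pos; auto.
  apply Qfcos_da.
Qed.

Definition Xi n x a := sin a * cos a * pw n x (cos a ^ 2).
Lemma Xi_d n x a : 0 < x < 1 -> is_derive (Xi n x) a
  ((2 * cos a ^ 2 - 1) * pw n x (cos a ^ 2) - 2 * cos a ^ 2 * (1 - cos a ^ 2) * (2 * x * (2 * INR n + 1) * pw (S n) x (cos a ^ 2))).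
Proof.
  intros Hx. unfold Xi. apply (sc_cos (pw n x)). apply pw_dk. apply Qf_cos_pos; auto.
Qed.

Definition c1 x := (7 * x ^ 4 - 6 * x ^ 2 - 1) / 2.
Definition c2 x := 3 / 2 * (1 - x ^ 2) ^ 3.
Definition d1 x := 3 * x * (1 - x ^ 2) ^ 2.
Definition P0 x := 8 * x ^ 3 - 4 * x.
Definition P1 x := 19 * x ^ 4 - 16 * x ^ 2 + 1.
Definition P2 x := 9 * x ^ 5 - 12 * x ^ 3 + 3 * x.
Definition P3 x := x ^ 2 * (1 - x ^ 2) ^ 2.
Definition Z x a := (c1 x * Xi 1 x a + c2 x * Xi 2 x a) * V 0 x a + d1 x * Xi 1 x a * V 1 x a + Yh x (Qf x (cos a ^ 2)).
Definition N0 x a := P0 x * Fo 0 x a + P1 x * Fo 1 x a + P2 x * Fo 2 x a + P3 x * Fo 3 x a.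

Lemma Z_d x a : 0 < x < 1 -> is_derive (Z x) a (N0 x a).
Proof.
  intros Hx. unfold Z. eapply isd_eq.
  - apply isd_plus; [apply isd_plus|].
    + apply isd_mult; [apply isd_plus; apply isd_scal; apply Xi_d; auto | exact (V_da 0 x a Hx)].
    + apply isd_mult; [apply isd_scal; apply Xi_d; auto | exact (V_da 1 x a Hx)].
    + apply Ya_d; auto.
  - unfold N0, Fo, wc. rewrite (V3_rel x a Hx), (V2_rel x a Hx).
    pose proof (Qf_cos_pos x a Hx) as HA. pose proof (Qf_sin_pos x a Hx) as HB. rewrite sin2 in HB.
    unfold Xi, YD, Rr, Rrd, FF, FFd. rewrite !KQ. rewrite !sin2.
    unfold h2, h3, c1, c2, d1, P0, P1, P2, P3, a0, a1, a0d, a1d, pp, qq, w.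
    unfold pw, hp, Q1. change (INR 1) with 1. change (INR 2) with (1 + 1).
    assert (HsA : 0 < sqrt (Qf x (cos a ^ 2))) by (apply sqrt_lt_R0; auto).
    assert (HsB : 0 < sqrt (Qf x (1 - cos a ^ 2))) by (apply sqrt_lt_R0; auto).
    set (sA := sqrt (Qf x (cos a ^ 2))) in *. set (sB := sqrt (Qf x (1 - cos a ^ 2))) in *.
    set (V0 := V 0 x a). set (V1 := V 1 x a).
    unfold K, Qf in *. set (C := cos a ^ 2) in *. cbv beta.
    field.
    repeat split; try (intro; lra); try (apply x2m1; auto); try (intro; nra).
Qed.

Lemma th_congr (F H : R -> R) z : 0 < z < 1 -> (forall u, 0 < u < 1 -> F u = H u) -> theta F z = theta H z.
Proof.
  intros Hz E. unfold theta. f_equal. apply Derive_ext_loc.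
  apply (filter_imp (fun u => 0 < u < 1)); [|apply loc_int; auto]. intros; apply E; auto.
Qed.

Lemma thD (F : R -> R) z l : is_derive F z l -> theta F z = z * l.
Proof. intros H. unfold theta. rewrite (is_derive_unique _ _ _ H). reflexivity. Qed.

Lemma DG j u : (j <= 2)%nat -> 0 < u < 1 -> Derive (fun x => G j x) u = G (S j) u.
Proof. intros; apply is_derive_unique, G_dx; auto. Qed.
Lemma EG j u : (j <= 2)%nat -> 0 < u < 1 -> ex_derive (fun x => G j x) u.
Proof. intros; eexists; apply G_dx; auto. Qed.

Ltac dG Hu := auto_derive; [repeat split; apply EG; auto; lia |
  rewrite ?(DG 0 _ ltac:(lia) Hu), ?(DG 1 _ ltac:(lia) Hu), ?(DG 2 _ ltac:(lia) Hu); ring].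

Lemma t0_1 u : 0 < u < 1 -> theta g u = u * G 1 u.
Proof. intros Hu. rewrite (th_congr g (G 0) u Hu g_eq). apply thD. apply G_dx; auto. Qed.
Lemma t0_2 u : 0 < u < 1 -> theta (theta g) u = u * (G 1 u + u * G 2 u).
Proof. intros Hu. rewrite (th_congr _ (fun y => y * G 1 y) u Hu t0_1). apply thD. dG Hu. Qed.
Lemma t0_3 u : 0 < u < 1 -> theta3 g u = u * (G 1 u + 3 * u * G 2 u + u ^ 2 * G 3 u).
Proof. intros Hu. unfold theta3. rewrite (th_congr _ (fun y => y * (G 1 y + y * G 2 y)) u Hu t0_2). apply thD. dG Hu. Qed.

Lemma t1_0 u : 0 < u < 1 -> (fun x => x * g x) u = u * G 0 u.
Proof. intros Hu. cbv beta. rewrite g_eq; auto. Qed.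
Lemma t1_1 u : 0 < u < 1 -> theta (fun x => x * g x) u = u * (G 0 u + u * G 1 u).
Proof. intros Hu. rewrite (th_congr _ (fun y => y * G 0 y) u Hu t1_0). apply thD. dG Hu. Qed.
Lemma t1_2 u : 0 < u < 1 -> theta (theta (fun x => x * g x)) u = u * (G 0 u + 3 * u * G 1 u + u ^ 2 * G 2 u).
Proof. intros Hu. rewrite (th_congr _ (fun y => y * (G 0 y + y * G 1 y)) u Hu t1_1). apply thD. dG Hu. Qed.
Lemma t1_3 u : 0 < u < 1 -> theta3 (fun x => x * g x) u = u * (G 0 u + 7 * u * G 1 u + 6 * u ^ 2 * G 2 u + u ^ 3 * G 3 u).
Proof. intros Hu. unfold theta3. rewrite (th_congr _ (fun y => y * (G 0 y + 3 * y * G 1 y + y ^ 2 * G 2 y)) u Hu t1_2). apply thD. dG Hu. Qed.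

Lemma t2_0 u : 0 < u < 1 -> (fun x => x ^ 2 * g x) u = u ^ 2 * G 0 u.
Proof. intros Hu. cbv beta. rewrite g_eq; auto. Qed.
Lemma t2_1 u : 0 < u < 1 -> theta (fun x => x ^ 2 * g x) u = u * (2 * u * G 0 u + u ^ 2 * G 1 u).
Proof. intros Hu. rewrite (th_congr _ (fun y => y ^ 2 * G 0 y) u Hu t2_0). apply thD. dG Hu. Qed.
Lemma t2_2 u : 0 < u < 1 -> theta (theta (fun x => x ^ 2 * g x)) u = u * (4 * u * G 0 u + 5 * u ^ 2 * G 1 u + u ^ 3 * G 2 u).
Proof. intros Hu. rewrite (th_congr _ (fun y => y * (2 * y * G 0 y + y ^ 2 * G 1 y)) u Hu t2_1). apply thD. dG Hu. Qed.
Lemma t2_3 u : 0 < u < 1 -> theta3 (fun x => x ^ 2 * g x) u = u * (8 * u * G 0 u + 19 * u ^ 2 * G 1 u + 9 * u ^ 3 * G 2 u + u ^ 4 * G 3 u).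
Proof. intros Hu. unfold theta3. rewrite (th_congr _ (fun y => y * (4 * y * G 0 y + 5 * y ^ 2 * G 1 y + y ^ 3 * G 2 y)) u Hu t2_2). apply thD. dG Hu. Qed.

Lemma Rop_G f : 0 < f < 1 -> Rop f = P0 f * G 0 f + P1 f * G 1 f + P2 f * G 2 f + P3 f * G 3 f.
Proof.
  intros Hf. unfold Rop. rewrite t0_3, t1_3, t1_1, t2_3 by auto.
  unfold P0, P1, P2, P3. field. lra.
Qed.

Lemma RInt_plus_R (f g : R -> R) (a b : R) : ex_RInt f a b -> ex_RInt g a b ->
  RInt (fun t => f t + g t) a b = RInt f a b + RInt g a b.
Proof. intros H1 H2. exact (RInt_plus f g a b H1 H2). Qed.

Lemma ex_c2 (F : R -> R -> R) x a b : (forall t, continuity_2d_pt F x t) -> ex_RInt (F x) a b.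
Proof.
  intros H. apply (ex_RInt_continuous (V := R_CompleteNormedModule)). intros z _.
  apply c2_cont; auto.
Qed.

Lemma c2_PFo (P : R -> R) j x t : 0 < x < 1 -> (forall u, continuity_pt P u) ->
  continuity_2d_pt (fun u v => P u * Fo j u v) x t.
Proof.
  intros Hx HP. refine (continuity_2d_pt_mult (fun u v => P u) (fun u v => Fo j u v) _ _ _ _).
  - exact (c2_comp1 P (fun u v => u) x t (HP x) (continuity_2d_pt_id1 x t)).
  - apply c2_Fo; auto.
Qed.

Lemma cpoly (P : R -> R) u : (forall y, ex_derive P y) -> continuity_pt P u.
Proof. intros H; apply cpt_of_der; auto. Qed.

Lemma RInt_lin4 (F0 F1 F2 F3 : R -> R) (c0 c1 c2 c3 a b : R) :
  ex_RInt F0 a b -> ex_RInt F1 a b -> ex_RInt F2 a b -> ex_RInt F3 a b ->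
  c0 * RInt F0 a b + c1 * RInt F1 a b + c2 * RInt F2 a b + c3 * RInt F3 a b =
  RInt (fun t => c0 * F0 t + c1 * F1 t + c2 * F2 t + c3 * F3 t) a b.
Proof.
  intros H0 H1 H2 H3.
  assert (E0 : ex_RInt (fun t => c0 * F0 t) a b) by (apply (ex_RInt_scal (V := R_NormedModule)); auto).
  assert (E1 : ex_RInt (fun t => c1 * F1 t) a b) by (apply (ex_RInt_scal (V := R_NormedModule)); auto).
  assert (E2 : ex_RInt (fun t => c2 * F2 t) a b) by (apply (ex_RInt_scal (V := R_NormedModule)); auto).
  assert (E3 : ex_RInt (fun t => c3 * F3 t) a b) by (apply (ex_RInt_scal (V := R_NormedModule)); auto).
  assert (E01 : ex_RInt (fun t => c0 * F0 t + c1 * F1 t) a b) by (apply (ex_RInt_plus (V := R_NormedModule)); auto).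
  assert (E012 : ex_RInt (fun t => c0 * F0 t + c1 * F1 t + c2 * F2 t) a b) by (apply (ex_RInt_plus (V := R_NormedModule)); auto).
    rewrite (RInt_plus_R (fun t => c0 * F0 t + c1 * F1 t + c2 * F2 t) (fun t => c3 * F3 t) a b E012 E3).
    rewrite (RInt_plus_R (fun t => c0 * F0 t + c1 * F1 t) (fun t => c2 * F2 t) a b E01 E2).
  rewrite (RInt_plus_R (fun t => c0 * F0 t) (fun t => c1 * F1 t) a b E0 E1).
    rewrite (RInt_scal_R F0 c0 a b H0), (RInt_scal_R F1 c1 a b H1), (RInt_scal_R F2 c2 a b H2), (RInt_scal_R F3 c3 a b H3).
    reflexivity.
Qed.


Lemma sum_G f : 0 < f < 1 ->
  P0 f * G 0 f + P1 f * G 1 f + P2 f * G 2 f + P3 f * G 3 f = RInt (N0 f) 0 (PI / 2).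
Proof.
  intros Hf. unfold G, N0.
  exact (RInt_lin4 (fun a => Fo 0 f a) (fun a => Fo 1 f a) (fun a => Fo 2 f a) (fun a => Fo 3 f a)
    (P0 f) (P1 f) (P2 f) (P3 f) 0 (PI / 2) (ex_RInt_Fo 0 f 0 (PI/2) Hf) (ex_RInt_Fo 1 f 0 (PI/2) Hf)
    (ex_RInt_Fo 2 f 0 (PI/2) Hf) (ex_RInt_Fo 3 f 0 (PI/2) Hf)).
Qed.

Lemma cont_N0 f t : 0 < f < 1 -> continuous (N0 f) t.
Proof.
  intros Hf. apply (c2_cont (fun u v => N0 u v) f t). unfold N0.
  assert (HP : forall P : R -> R, (forall y, ex_derive P y) -> forall u, continuity_pt P u) by (intros; apply cpoly; auto).
  assert (D0 : forall y, ex_derive P0 y) by (intros; unfold P0; auto_derive; auto).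
  assert (D1 : forall y, ex_derive P1 y) by (intros; unfold P1; auto_derive; auto).
  assert (D2 : forall y, ex_derive P2 y) by (intros; unfold P2; auto_derive; auto).
  assert (D3 : forall y, ex_derive P3 y) by (intros; unfold P3; auto_derive; auto).
  refine (continuity_2d_pt_plus (fun u v => P0 u * Fo 0 u v + P1 u * Fo 1 u v + P2 u * Fo 2 u v) (fun u v => P3 u * Fo 3 u v) _ _ _ _).
  refine (continuity_2d_pt_plus (fun u v => P0 u * Fo 0 u v + P1 u * Fo 1 u v) (fun u v => P2 u * Fo 2 u v) _ _ _ _).
  refine (continuity_2d_pt_plus (fun u v => P0 u * Fo 0 u v) (fun u v => P1 u * Fo 1 u v) _ _ _ _).
  all: apply c2_PFo; auto.
Qed.

Lemma ftc f : 0 < f < 1 -> RInt (N0 f) 0 (PI / 2) = Z f (PI / 2) - Z f 0.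
Proof.
  intros Hf. apply is_RInt_unique.
  apply (is_RInt_derive (Z f) (N0 f) 0 (PI/2)).
  - intros t _. apply Z_d; auto.
  - intros t _. apply cont_N0; auto.
Qed.

Lemma Zend f : 0 < f < 1 -> Z f (PI / 2) - Z f 0 = 2 * (2 * f / (1 + f ^ 2)) ^ 2 - 1.
Proof.
  intros Hf. unfold Z, Xi. rewrite sin_0, cos_0, cos_PI2.
  replace (Qf f (0 ^ 2)) with ((1 + f) ^ 2) by (unfold Qf; ring).
  replace (Qf f (1 ^ 2)) with ((1 - f) ^ 2) by (unfold Qf; ring).
  unfold Yh, Rr, FF, hp, K, pp, qq.
  replace (2 * (1 + f ^ 2) - (1 + f) ^ 2) with ((1 - f) ^ 2) by ring.
  replace (2 * (1 + f ^ 2) - (1 - f) ^ 2) with ((1 + f) ^ 2) by ring.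
  rewrite !sqrt_pow2 by lra. rewrite !pow_O.
  field. repeat split; try (intro; lra); try (intro; nra).
Qed.

Theorem theorem1 (f : R) (hf0 : 0 < f) (hf1 : f < 1) :
  Rop f = 2 * (2 * f / (1 + f ^ 2)) ^ 2 - 1.
Proof.
  assert (Hf : 0 < f < 1) by lra.
  rewrite (Rop_G f Hf), (sum_G f Hf), (ftc f Hf). apply Zend; auto.
Qed.
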